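(* Let $d\ge 2$ and let $c_0,\dots,c_7\in\mathbb{Z}_d$. If the $d$-state first degree cellular automaton with parameters $\langle c_0,\dots,c_7\rangle$ is reversible for every number of cells $n\in\mathbb{N}$ under the null boundary condition, then $c_4\cdot c_6\equiv 0 \pmod{\mathrm{rad}(d)}$.
   Context: Fix an integer $d\ge 2$ and the state set $S=\mathbb{Z}_d=\{0,1,\dots,d-1\}$. A first degree cellular automaton (FDCA) with parameters $\langle c_0,\dots,c_7\rangle$, $c_i\in\mathbb{Z}_d$, is the one-dimensional 3-neighborhood cellular automaton whose local rule $R:S^3\to S$ is $R(x,y,z)=c_0xyz+c_1xy+c_2xz+c_3yz+c_4x+c_5y+c_6z+c_7 \pmod d$. For $n\in\mathbb{N}$, $n\ge1$, the $n$-cell automaton under the null boundary condition acts on configurations $x=(x_0,\dots,x_{n-1})\in S^n$ by the global map $G_n:S^n\to S^n$, $G_n(x)_i=R(x_{i-1},x_i,x_{i+1})$ for $0\le i\le n-1$, with the convention $x_{-1}=x_n=0$. The automaton is reversible for a given $n$ if $G_n$ is a bijection. $\mathrm{rad}(d)=\prod_{p\mid d,\ p\text{ prime}}p$ is the product of the distinct primes dividing $d$; since $\mathrm{rad}(d)\mid d$, congruences of elements of $\mathbb{Z}_d$ modulo $\mathrm{rad}(d)$ are well defined. *)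

(* Defs.v *)
From mathcomp Require Import all_boot.
Set Implicit Arguments. Unset Strict Implicit. Unset Printing Implicit Defensive.

(* States: Z_d represented as 'I_d (values 0..d-1), arithmetic mod d on nat. *)

Definition rad (d : nat) : nat := \prod_(p <- primes d) p.

Definition fdca_rule (d : nat) (c : 'I_8 -> 'I_d) (x y z : nat) : nat :=
  (c (inord 0) * x * y * z + c (inord 1) * x * y + c (inord 2) * x * z
   + c (inord 3) * y * z + c (inord 4) * x + c (inord 5) * y
   + c (inord 6) * z + c (inord 7)) %% d.

(* value of cell k of configuration x (null boundary: 0 outside 0..n-1) *)
Definition cell (d n : nat) (x : {ffun 'I_n -> 'I_d}) (k : nat) : nat :=
  match insub k with Some i => val (x i) | None => 0 end.

Lemma fdca_rule_lt (d : nat) (c : 'I_8 -> 'I_d) x y z :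
  fdca_rule c x y z < d.
Proof.
  case: d c => [|d] c; first by case: (c (inord 0)).
  by rewrite ltn_mod.
Qed.

Definition fdca_global (d : nat) (c : 'I_8 -> 'I_d) (n : nat)
  (x : {ffun 'I_n -> 'I_d}) : {ffun 'I_n -> 'I_d} :=
  [ffun i : 'I_n =>
     Ordinal (fdca_rule_lt c (if val i == 0 then 0 else cell x (val i).-1)
                          (val (x i)) (cell x (val i).+1)) ].

Arguments fdca_global {d} c n x.
Definition fdca_reversible (d : nat) (c : 'I_8 -> 'I_d) (n : nat) : Prop :=
  bijective (fdca_global c n).

(* Main.v *)
From mathcomp Require Import all_boot all_algebra ring.
Require Import Defs.
Import GRing.Theory.
Set Implicit Arguments. Unset Strict Implicit. Unset Printing Implicit Defensive.
Local Open Scope ring_scope.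
Local Open Scope nat_scope.

Lemma coprime_prod_primes p s : prime p -> p \notin s -> all prime s ->
  coprime p (\prod_(q <- s) q)%N.
Proof.
move=> pp; elim: s => [|q s IH] /=; first by rewrite big_nil coprimen1.
rewrite inE negb_or => /andP[pq ps] /andP[qp sp].
rewrite big_cons coprimeMr IH // andbT prime_coprime // dvdn_prime2 // eq_sym.
Qed.

Lemma prod_primes_dvd s m : uniq s -> all prime s -> (forall p, p \in s -> (p %| m)%N) ->
  (\prod_(q <- s) q %| m)%N.
Proof.
elim: s => [|q s IH] /=; first by rewrite big_nil dvd1n.
move=> /andP[qs us] /andP[qp sp] H.
rewrite big_cons Gauss_dvd ?coprime_prod_primes // H ?inE ?eqxx //=.
by apply: IH => // p ps; apply: H; rewrite inE ps orbT.
Qed.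

Lemma rad_dvd d m : (forall p, prime p -> (p %| d)%N -> (p %| m)%N) -> (rad d %| m)%N.
Proof.
move=> H; apply: prod_primes_dvd; first exact: primes_uniq.
  by apply/allP => p; rewrite mem_primes => /andP[].
by move=> p; rewrite mem_primes => /and3P[pp _ pd]; apply: H.
Qed.

Local Open Scope ring_scope.

Section FieldPart.
Variable F : fieldType.
Variable C : nat -> F.

Definition rl (a b z : F) := C 0 * a * b * z + C 1 * a * b + C 2 * a * z
  + C 3 * b * z + C 4 * a + C 5 * b + C 6 * z + C 7.

Definition cellF n (x : {ffun 'I_n -> F}) (k : nat) : F :=
  match insub k with Some i => x i | None => 0 end.

Definition Gb n (x : {ffun 'I_n -> F}) : {ffun 'I_n -> F} :=
  [ffun i : 'I_n => rl (if val i == 0%N then 0 else cellF x (val i).-1)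
                        (x i) (cellF x (val i).+1)].

Definition collides := exists n, exists x y : {ffun 'I_n -> F}, x != y /\ Gb x = Gb y.

Definition mk n (s : nat -> F) : {ffun 'I_n -> F} := [ffun i : 'I_n => s i].
Definition prev (s : nat -> F) (i : nat) := if i == 0%N then 0 else s i.-1.

Lemma cellF_mk n s k : (k <= n)%N -> s n = 0 -> cellF (mk n s) k = s k.
Proof.
move=> kn sn; rewrite /cellF; case: insubP => [i _ <-|]; first by rewrite ffunE.
by rewrite -leqNgt => nk; have -> : k = n by apply/eqP; rewrite eqn_leq kn.
Qed.

Lemma collide_seq n s t : s n = 0 -> t n = 0 -> (exists2 i, (i < n)%N & s i != t i) ->
  (forall i, (i < n)%N -> rl (prev s i) (s i) (s i.+1) = rl (prev t i) (t i) (t i.+1)) ->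
  collides.
Proof.
move=> sn tn [i0 i0n ne] H; exists n, (mk n s), (mk n t); split.
  apply/eqP => /ffunP /(_ (Ordinal i0n)); rewrite !ffunE /= => e.
  by rewrite e eqxx in ne.
apply/ffunP => i; rewrite !ffunE.
have hi : ((val i).+1 <= n)%N by exact: ltn_ord.
rewrite (cellF_mk hi sn) (cellF_mk hi tn).
have := H _ (ltn_ord i); rewrite /prev.
case: i hi => [[|k] hk] hi //= e.
have hj : (k <= n)%N by rewrite ltnW // ltnW.
by rewrite (cellF_mk hj sn) (cellF_mk hj tn).
Qed.

Lemma rlE0 a b : rl 0 a b = a * (C 3 * b + C 5) + C 6 * b + C 7.
Proof. rewrite /rl; ring. Qed.
Lemma rlE0' a b : rl 0 a b = b * (C 3 * a + C 6) + C 5 * a + C 7.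
Proof. rewrite /rl; ring. Qed.
Lemma rlE1 a b : rl a b 0 = a * (C 1 * b + C 4) + C 5 * b + C 7.
Proof. rewrite /rl; ring. Qed.
Lemma rlE1' a b : rl a b 0 = b * (C 1 * a + C 5) + C 4 * a + C 7.
Proof. rewrite /rl; ring. Qed.

Lemma L1 : C 5 = 0 -> collides.
Proof.
move=> h5; apply: (@collide_seq 1 (fun k => nth 0 [:: 1] k) (fun k => nth 0 [:: 0] k)) => //.
  by exists 0%N => //=; rewrite oner_neq0.
by case=> [|i] //= _; rewrite /prev /= /rl h5; ring.
Qed.

Lemma L2 : C 3 != 0 -> collides.
Proof.
move=> h3; set bs := - C 5 / C 3.
have hb : C 3 * bs + C 5 = 0 by rewrite /bs; field.
have [hD|hD] := eqVneq (C 1 * bs + C 4) 0.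
  apply: (@collide_seq 2 (fun k => nth 0 [:: 0; bs] k) (fun k => nth 0 [:: 1; bs] k)) => //.
    by exists 0%N => //=; rewrite eq_sym oner_neq0.
  case=> [|[|i]] //= _; rewrite /prev /=.
    by rewrite !rlE0 hb !mulr0.
  by rewrite !rlE1 hD !mulr0.
set b' := bs + 1; set a' := - C 6 / C 3.
have hb' : C 3 * b' + C 5 = C 3 by rewrite /b' mulrDr mulr1 addrAC hb add0r.
set X := a' * (C 1 * b' + C 4) + C 5 * b' - C 5 * bs.
set a'' := X / (C 1 * bs + C 4).
apply: (@collide_seq 2 (fun k => nth 0 [:: a'; b'] k) (fun k => nth 0 [:: a''; bs] k)) => //.
  by exists 1%N => //=; rewrite /b' -subr_eq0 addrAC subrr add0r oner_neq0.
case=> [|[|i]] //= _; rewrite /prev /=.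
  rewrite !rlE0 hb hb' mulr0 /a' /b'; field; done.
rewrite !rlE1 /a'' divfK // /X; ring.
Qed.

Lemma L2' : C 1 != 0 -> collides.
Proof.
move=> h1; set as_ := - C 5 / C 1.
have hb : C 1 * as_ + C 5 = 0 by rewrite /as_; field.
have [hD|hD] := eqVneq (C 3 * as_ + C 6) 0.
  apply: (@collide_seq 2 (fun k => nth 0 [:: as_; 0] k) (fun k => nth 0 [:: as_; 1] k)) => //.
    by exists 1%N => //=; rewrite eq_sym oner_neq0.
  case=> [|[|i]] //= _; rewrite /prev /=.
    by rewrite !rlE0' hD !mulr0.
  by rewrite !rlE1' hb !mulr0.
set a' := as_ + 1; set b' := - C 4 / C 1.
have ha' : C 1 * a' + C 5 = C 1 by rewrite /a' mulrDr mulr1 addrAC hb add0r.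
set X := b' * (C 3 * a' + C 6) + C 5 * a' - C 5 * as_.
set b'' := X / (C 3 * as_ + C 6).
apply: (@collide_seq 2 (fun k => nth 0 [:: a'; b'] k) (fun k => nth 0 [:: as_; b''] k)) => //.
  by exists 0%N => //=; rewrite /a' -subr_eq0 addrAC subrr add0r oner_neq0.
case=> [|[|i]] //= _; rewrite /prev /=.
  rewrite !rlE0' /b'' divfK // /X; ring.
rewrite !rlE1' hb ha' mulr0 /a' /b'; field; done.
Qed.

Lemma L3 : C 1 = 0 -> C 3 = 0 -> C 5 != 0 -> C 6 != 0 -> (C 0 != 0) || (C 2 != 0) ->
  collides.
Proof.
move=> h1 h3 h5 h6 h02.
set g := C 6 / C 5; set dl := C 4 / C 5.
have hg : g != 0 by rewrite /g mulf_neq0 ?invr_eq0.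
have [h2|h2] := eqVneq (C 2) 0.
  rewrite h2 eqxx orbF in h02.
  set q := (C 5 - C 4 * g - C 6 * dl) / (g * C 0).
  apply: (@collide_seq 3 (fun k => nth 0 [:: 0; 0; dl + q] k)
             (fun k => nth 0 [:: - g; 1; q] k)) => //.
    by exists 1%N => //=; rewrite eq_sym oner_neq0.
  case=> [|[|[|i]]] //= _; rewrite /prev /= /rl h1 h2 h3 /q /g /dl; field; by rewrite ?h5 ?h6 ?h02.
set w := (C 5 - C 4 * g - C 6 * dl) / (g * C 2).
apply: (@collide_seq 3 (fun k => nth 0 [:: 0; 1; w - dl] k)
           (fun k => nth 0 [:: g; 0; w] k)) => //.
  by exists 1%N => //=; rewrite oner_neq0.
case=> [|[|[|i]]] //= _; rewrite /prev /= /rl h1 h3 /w /g /dl; field; by rewrite ?h5 ?h6 ?h2.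
Qed.

End FieldPart.

Section Linear.
Variable F : finFieldType.
Variable C : nat -> F.

Lemma iter_cancel (T : Type) (f : T -> T) (s : T) : injective f ->
  forall i k, iter i f s = iter (i + k) f s -> s = iter k f s.
Proof.
move=> fi; elim=> [|i IH] k /= e; first by [].
apply: IH; exact: fi e.
Qed.

Lemma L4 : C 0 = 0 -> C 1 = 0 -> C 2 = 0 -> C 3 = 0 -> C 4 != 0 -> C 6 != 0 ->
  collides C.
Proof.
move=> h0 h1 h2 h3 h4 h6.
pose T (p : F * F) := (p.2, - (C 4 * p.1 + C 5 * p.2) / C 6).
have Ti : injective T.
  move=> [a b] [a' b'] [/= eb]; rewrite eb => e; congr (_, _).
  move: e => /(mulIf (invr_neq0 h6))/oppr_inj/addIr/(mulfI h4) //.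
pose s0 : F * F := (0, 1).
pose st k := iter k T s0.
have key p : rl C p.1 p.2 (T p).2 = rl C 0 0 0.
  by rewrite /rl h0 h1 h2 h3 /=; field.
have [k k0 ek] : exists2 k, (0 < k)%N & iter k T s0 = s0.
  pose f (i : 'I_(#|{: F * F}|).+1) := st i.
  have : ~~ injectiveb f.
    by apply/negP => /injectiveP/leq_card; rewrite card_ord ltnn.
  case/injectivePn => i [j] ne e.
  wlog lij : i j ne e / (i < j)%N.
    move=> W; case: (ltngtP i j) => [l|l|l]; first exact: (W i j).
      by apply: (W j i) => //; rewrite eq_sym.
    by move/eqP: ne; case; apply: val_inj.
  exists (j - i)%N; first by rewrite subn_gt0.
  by symmetry; apply: (iter_cancel Ti (i := i)); rewrite subnKC // ltnW.
case: k k0 ek => [//|[|n]] _ ek.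
  by move: ek => /= [] /eqP; rewrite oner_eq0.
have sn : (st n.+1).2 = 0.
  by have := congr1 fst ek; rewrite iterS.
apply: (@collide_seq F C n.+1 (fun m => (st m).2) (fun _ => 0)) => //.
  by exists 0%N => //=; rewrite oner_neq0.
move=> i _; rewrite /prev.
have -> : (if i == 0%N then 0 else (st i.-1).2) = (st i).1.
  by case: i => [|i] //=; rewrite iterS.
rewrite /st iterS key; by case: (i == 0%N).
Qed.

End Linear.

Lemma all_collide (F : finFieldType) (C : nat -> F) : C 4 != 0 -> C 6 != 0 -> collides C.
Proof.
move=> h4 h6.
have [h5|h5] := eqVneq (C 5) 0; first exact: L1.
have [h3|h3] := eqVneq (C 3) 0; last exact: L2.
have [h1|h1] := eqVneq (C 1) 0; last exact: L2'.
have [h0|h0] := eqVneq (C 0) 0; last by apply: L3; rewrite ?h0.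
have [h2|h2] := eqVneq (C 2) 0; last by apply: L3; rewrite ?h2 ?orbT.
exact: L4.
Qed.

Lemma surj_inj (T : finType) (f : T -> T) : (forall y, exists x, f x = y) -> injective f.
Proof.
move=> fs x y e.
have : #|image f T| == #|T|.
  apply/eqP; apply: eq_card => z; rewrite !inE; apply/codomP.
  by have [w <-] := fs z; exists w.
by move/image_injP => fi; apply: fi.
Qed.

Local Close Scope ring_scope.
Local Open Scope nat_scope.

Theorem lemma3 (d : nat) (c : 'I_8 -> 'I_d) :
  2 <= d ->
  (forall n : nat, 1 <= n -> fdca_reversible c n) ->
  (val (c (inord 4)) * val (c (inord 6)) = 0 %[mod rad d]).
Proof.
move=> hd hrev; rewrite mod0n; apply/eqP; change (rad d %| c (inord 4) * c (inord 6)).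
apply: rad_dvd => p pp pd; apply/negPn/negP => npm.
pose C k : 'F_p := ((val (c (inord k)))%:R)%R.
have Fp0 k : (((k%:R : 'F_p) == 0)%R) = (p %| k).
  by rewrite -(inj_eq val_inj) /= val_Fp_nat.
have h4 : (C 4 != 0)%R by rewrite Fp0; apply: contra npm; exact: dvdn_mulr.
have h6 : (C 6 != 0)%R by rewrite Fp0; apply: contra npm; exact: dvdn_mull.
have := all_collide h4 h6; rewrite /collides; case=> n [x [y [nxy exy]]].
have n0 : 0 < n.
  move: x y nxy exy; case: n => // x y nxy _.
  by case/eqP: nxy; apply/ffunP => -[m hm]; exfalso; move: hm; rewrite ltn0.
have [g gK Kg] := hrev n n0.
pose pi (z : {ffun 'I_n -> 'I_d}) : {ffun 'I_n -> 'F_p} := [ffun i => ((val (z i))%:R)%R].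
have pd' : p <= d by rewrite dvdn_leq // (leq_trans _ hd).
have comm z : pi (fdca_global c n z) = Gb C (pi z).
  apply/ffunP => i; rewrite !ffunE /= /fdca_rule -Fp_nat_mod // (modn_dvdm _ pd) Fp_nat_mod //.
  have hc k : ((cell z k)%:R)%R = cellF (pi z) k :> 'F_p.
    by rewrite /cell /cellF; case: insub => [j|] //; rewrite ffunE.
  rewrite !natrD !natrM /rl -!hc.
  by case: (val i == 0).
have wp (u : 'F_p) : val u < p.
  have e : u = ((val u)%:R : 'F_p)%R by rewrite natr_Zp.
  have := val_Fp_nat pp (val u); rewrite -e => h; change (nat_of_ord u < p); rewrite h.
  by rewrite ltn_pmod // prime_gt0.
have piS (w : {ffun 'I_n -> 'F_p}) : exists z, pi z = w.
  have lt i : val (w i) < d.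
    exact: leq_trans (wp _) pd'.
  exists [ffun i => Ordinal (lt i)]; apply/ffunP => i; rewrite !ffunE /=.
  apply: val_inj; rewrite /= val_Fp_nat // modn_small //.
  exact: wp.
have Ginj : injective (Gb C (n := n)).
  apply: surj_inj => w; have [z <-] := piS w.
  by exists (pi (g z)); rewrite -comm Kg.
by move/Ginj: exy; apply/eqP.
Qed.
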